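(* Let $p_1,p_2,p_3,p_4$ be distinct primes with $p_3>p_1p_2$ and $p_4>p_1p_2$. Then the numerical semigroup $S=\langle p_1p_3,\,p_2p_3,\,p_1p_4,\,p_2p_4\rangle$ is a complete intersection but is not free.
   Context: A numerical semigroup is a submonoid $S$ of $(\mathbb N,+)$ with finite complement in $\mathbb N$, with minimal system of generators $g_1,\dots,g_\nu$. $S$ is a complete intersection if the semigroup ring $\Bbbk[[t^S]]$ is a complete intersection, equivalently if a minimal presentation of $S$ (a minimal generating set of the congruence $\ker(\mathbb N^\nu\to S,\ (\lambda_i)\mapsto\sum\lambda_ig_i)$) has cardinality $\nu-1$. For $n\in S$, $\mathrm{Ap}(S,n)=\{s\in S: s-n\notin S\}$. For an ordering $\mathbf n=(n_1,\dots,n_\nu)$ of the minimal generators, $\phi_i=\min\{h\in\mathbb N: hn_i\in\langle n_1,\dots,n_{i-1}\rangle\}-1$ ($i=2,\dots,\nu$). $S$ is free if for some ordering $\mathrm{Ap}(S,n_1)=\{\sum_{i=2}^\nu\lambda_in_i: 0\le\lambda_i\le\phi_i\}$. *)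

(* Defs.v *)
From mathcomp Require Import all_boot.
Set Implicit Arguments. Unset Strict Implicit. Unset Printing Implicit Defensive.

Definition in_sg (g : seq nat) (x : nat) : Prop :=
  exists a : nat -> nat, x = \sum_(i < size g) a i * nth 0 g i.

Definition sg_of (g : seq nat) : nat -> Prop := in_sg g.

Definition minimal_gens (S : nat -> Prop) (g : seq nat) : Prop :=
  [/\ uniq g,
      (forall x, S x <-> in_sg g x) &
      (forall i, i < size g -> ~ in_sg (rem (nth 0 g i) g) (nth 0 g i))].

(* Factorizations: elements of N^nu, nu = size g. *)
Definition vec (n : nat) := {ffun 'I_n -> nat}.
Definition vadd n (a b : vec n) : vec n := [ffun i => a i + b i].

Definition fact_eval (g : seq nat) (a : vec (size g)) : nat :=
  \sum_(i < size g) a i * nth 0 g i.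

Definition is_congruence n (R : vec n -> vec n -> Prop) : Prop :=
  [/\ (forall a, R a a), (forall a b, R a b -> R b a),
      (forall a b c, R a b -> R b c -> R a c) &
      (forall a b c, R a b -> R (vadd a c) (vadd b c))].

Definition gen_cong n (rho : seq (vec n * vec n)) (a b : vec n) : Prop :=
  forall R, is_congruence R -> (forall p, p \in rho -> R p.1 p.2) -> R a b.

Definition is_presentation (g : seq nat) (rho : seq (vec (size g) * vec (size g)))
  : Prop :=
  forall a b, gen_cong rho a b <-> fact_eval a = fact_eval b.

Arguments is_presentation : clear implicits.

Definition is_minimal_presentation (g : seq nat)
  (rho : seq (vec (size g) * vec (size g))) : Prop :=
  is_presentation g rho /\
  forall rho', {subset rho' <= rho} -> (exists2 p, p \in rho & p \notin rho') ->
    ~ is_presentation g rho'.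

Arguments is_minimal_presentation : clear implicits.

Definition complete_intersection (S : nat -> Prop) : Prop :=
  exists g, minimal_gens S g /\
    exists rho, [/\ uniq rho, is_minimal_presentation g rho & size rho = (size g).-1].

(* Apery set Ap(S,n) = {s in S : s - n notin S} (s - n taken in Z). *)
Definition Apery (S : nat -> Prop) (n s : nat) : Prop :=
  S s /\ ~ (n <= s /\ S (s - n)).

(* h is the least positive integer with h * g_i in <g_1,...,g_{i-1}>
   (0-based index: <nth 0 g 0, ..., nth 0 g (i-1)>). *)
Definition least_mult (g : seq nat) (i h : nat) : Prop :=
  [/\ 0 < h, in_sg (take i g) (h * nth 0 g i) &
      forall h', 0 < h' -> in_sg (take i g) (h' * nth 0 g i) -> h <= h'].

(* S is free: for some ordering n_1,...,n_nu of the minimal generators,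
   Ap(S,n_1) = { sum_{i>=2} l_i n_i : 0 <= l_i <= phi_i },
   with phi_i = min{h >= 1 : h n_i in <n_1..n_{i-1}>} - 1. *)
Definition free (S : nat -> Prop) : Prop :=
  exists g, minimal_gens S g /\ 0 < size g /\
    exists phi : nat -> nat,
      (forall i, 0 < i < size g -> least_mult g i (phi i).+1) /\
      (forall s, Apery S (nth 0 g 0) s <->
         exists l : nat -> nat,
           (forall i, 0 < i < size g -> l i <= phi i) /\
           s = \sum_(1 <= i < size g) l i * nth 0 g i).

(* Main.v *)
Require Import Defs.
From mathcomp Require Import all_boot zify.
Set Implicit Arguments. Unset Strict Implicit. Unset Printing Implicit Defensive.


Lemma in_sg_nil y : in_sg [::] y <-> y = 0.
Proof. by split => [[a ->]|->]; [rewrite big_ord0 | exists (fun _ => 0); rewrite big_ord0]. Qed.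

Lemma in_sg_cons v g y :
  in_sg (v :: g) y <-> exists k w, in_sg g w /\ y = k * v + w.
Proof.
split.
  move=> [a ->]; rewrite big_ord_recl /=.
  exists (a 0), (\sum_(i < size g) a (bump 0 i) * nth 0 g i); split => //.
  by exists (fun i => a i.+1).
move=> [k [w [[a ->] ->]]].
exists (fun i => if i is i'.+1 then a i' else k).
by rewrite big_ord_recl.
Qed.

Lemma in_sg0 g : in_sg g 0.
Proof. by exists (fun _ => 0); rewrite big1 // => i _; rewrite mul0n. Qed.

Lemma in_sgD g x y : in_sg g x -> in_sg g y -> in_sg g (x + y).
Proof.
move=> [a ->] [b ->]; exists (fun i => a i + b i).
by rewrite -big_split /=; apply: eq_bigr => i _; rewrite mulnDl.
Qed.

Lemma in_sgM g k x : in_sg g x -> in_sg g (k * x).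
Proof.
move=> [a ->]; exists (fun i => k * a i).
by rewrite big_distrr /=; apply: eq_bigr => i _; rewrite mulnA.
Qed.

Lemma in_sg_mem g v : v \in g -> in_sg g v.
Proof.
elim: g => // x g IH; rewrite inE => /orP[/eqP->|/IH H]; apply/in_sg_cons.
  by exists 1, 0; split; [apply: in_sg0 | rewrite mul1n addn0].
by exists 0, v.
Qed.

Lemma in_sg_sub g g' y : (forall v, v \in g -> in_sg g' v) -> in_sg g y -> in_sg g' y.
Proof.
elim: g y => [|x g IH] y H.
  by move/in_sg_nil->; apply: in_sg0.
move/in_sg_cons=> [k [w [Hw ->]]]; apply: in_sgD.
  by apply: in_sgM; apply: H; rewrite inE eqxx.
by apply: IH => // v Hv; apply: H; rewrite inE Hv orbT.
Qed.

Lemma in_sg_perm g g' y : perm_eq g g' -> in_sg g y -> in_sg g' y.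
Proof. by move=> P; apply: in_sg_sub => v Hv; apply: in_sg_mem; rewrite -(perm_mem P). Qed.

Lemma in_sg1 a y : in_sg [:: a] y <-> exists k, y = k * a.
Proof.
rewrite in_sg_cons; split => [[k [w [/in_sg_nil -> ->]]]|[k ->]]; first by exists k; rewrite addn0.
by exists k, 0; rewrite addn0; split => //; apply/in_sg_nil.
Qed.

Lemma in_sg2 a b y : in_sg [:: a; b] y <-> exists k1 k2, y = k1 * a + k2 * b.
Proof.
rewrite in_sg_cons; split => [[k [w [/in_sg1 [k2 ->] ->]]]|[k1 [k2 ->]]]; first by exists k, k2.
by exists k1, (k2 * b); split => //; apply/in_sg1; exists k2.
Qed.

Lemma in_sg3 a b c y : in_sg [:: a; b; c] y <-> exists k1 k2 k3, y = k1 * a + k2 * b + k3 * c.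
Proof.
rewrite in_sg_cons; split => [[k [w [/in_sg2 [k2 [k3 ->]] ->]]]|[k1 [k2 [k3 ->]]]].
  by exists k, k2, k3; rewrite addnA.
by exists k1, (k2 * b + k3 * c); split; [apply/in_sg2; exists k2, k3 | rewrite addnA].
Qed.

Lemma irred_of_min g x y z : x \in g -> ~ in_sg (rem x g) x ->
  in_sg g y -> in_sg g z -> x = y + z -> y = 0 \/ z = 0.
Proof.
move=> xg Hmin Hy Hz E.
have P := perm_to_rem xg.
move: (in_sg_perm P Hy) (in_sg_perm P Hz) => /in_sg_cons [k [w [Hw Ey]]] /in_sg_cons [k' [w' [Hw' Ez]]].
case: k Ey => [|k] Ey; last by right; nia.
case: k' Ez => [|k'] Ez; last by left; nia.
have Hx : x = w + w' by rewrite E Ey Ez !mul0n.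
exfalso; apply: Hmin; suff: in_sg (rem x g) (w + w') by rewrite -Hx.
exact: in_sgD.
Qed.

Lemma atom_in (P : nat -> Prop) G x :
  (forall w, in_sg G w -> P w) ->
  (forall y z, P y -> P z -> x = y + z -> y = 0 \/ z = 0) ->
  0 \notin G -> in_sg G x -> 0 < x -> x \in G.
Proof.
elim: G => [|v G IH] HP Hirr H0 Hx xpos.
  by move/in_sg_nil: Hx => E; rewrite E in xpos.
move/in_sg_cons: Hx => [k [w [Hw E]]].
have vnz : v != 0 by apply: contra H0 => /eqP <-; rewrite inE eqxx.
case: k E => [|k] E.
  rewrite inE; apply/orP; right; apply: IH => //.
  - move=> u Hu; apply: HP; apply/in_sg_cons; exists 0, u; split => //.
  - by apply: contra H0; rewrite inE => ->; rewrite orbT.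
  - by rewrite E.
have [H1|H1] : v = 0 \/ k * v + w = 0.
  apply: Hirr.
- apply: HP; apply: in_sg_mem; by rewrite inE eqxx.
- apply: HP; apply/in_sg_cons; exists k, w; split => //.
- by rewrite E mulSn addnA.
- by rewrite H1 in vnz.
- by rewrite inE; apply/orP; left; apply/eqP; rewrite E mulSn -addnA H1 addn0.
Qed.


Lemma modsolve m n y : 0 < m -> gcdn m n %| y ->
  exists l, l < m %/ gcdn m n /\ l * n = y %[mod m].
Proof.
move=> m0 gy.
have g0 : 0 < gcdn m n by rewrite gcdn_gt0 m0.
have mg0 : 0 < m %/ gcdn m n by rewrite divn_gt0 // dvdn_leq // dvdn_gcdl.
have [l0 Hl0] : exists l0, l0 * n = y %[mod m].
  case: (posnP n) => [n0|n0].
    move: gy; rewrite n0 gcdn0 => /dvdnP [q ->].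
    by exists 0; rewrite mul0n modnMl mod0n.
  case: (@egcdnP n m n0) => km kn E _.
  move: gy => /dvdnP [q ->].
  exists (km * q); rewrite mulnAC E mulnDl mulnAC modnMDl mulnC.
  by rewrite gcdnC.
exists (l0 %% (m %/ gcdn m n)); split; first by rewrite ltn_mod.
rewrite -Hl0 {2}(divn_eq l0 (m %/ gcdn m n)) mulnDl.
have -> : l0 %/ (m %/ gcdn m n) * (m %/ gcdn m n) * n
   = (l0 %/ (m %/ gcdn m n) * (n %/ gcdn m n)) * m.
  rewrite -!mulnA; congr (_ * _).
  by rewrite [LHS]mulnC gcdnC muln_divCA_gcd mulnC.
by rewrite modnMDl.
Qed.

Lemma div_gcd_dvd m n h : 0 < m -> m %| h * n -> m %/ gcdn m n %| h.
Proof.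
move=> m0 H.
have g0 : 0 < gcdn m n by rewrite gcdn_gt0 m0.
have H2 : m %| h * gcdn m n.
  by rewrite muln_gcdr dvdn_gcd H andbT dvdn_mull.
rewrite -(dvdn_pmul2r g0) divnK //; exact: dvdn_gcdl.
Qed.

Lemma sylv P1 P2 N : prime P1 -> prime P2 -> P1 != P2 -> P1 * P2 < N ->
  exists x y, N = x * P1 + y * P2.
Proof.
move=> pr1 pr2 ne lt.
have c12 : coprime P1 P2 by rewrite prime_coprime // dvdn_prime2.
have p10 : 0 < P1 by apply: prime_gt0.
have g1 : gcdn P1 P2 = 1 by apply/eqP.
have gd : gcdn P1 P2 %| N by rewrite g1 dvd1n.
have [l [Hl E]] := modsolve p10 gd.
rewrite g1 divn1 in Hl.
have le : l * P2 <= N by apply: leq_trans (ltnW lt); rewrite leq_mul2r ltnW ?orbT.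
move/eqP: E; rewrite eq_sym eqn_mod_dvd // => /dvdnP [x Ex].
by exists x, l; rewrite -Ex subnK.
Qed.

Lemma NM P1 P2 P3 P4 k1 k2 k3 : prime P1 -> prime P2 -> prime P3 -> prime P4 ->
  P1 != P2 -> P3 != P4 -> P1 * P2 < P4 ->
  P1 * P3 <> k1 * (P2 * P3) + k2 * (P1 * P4) + k3 * (P2 * P4).
Proof.
move=> pr1 pr2 pr3 pr4 n12 n34 lt E.
have p1 := prime_gt1 pr1; have p2 := prime_gt1 pr2; have p3 := prime_gt1 pr3.
have E' : P1 * P3 = k1 * (P2 * P3) + P4 * (k2 * P1 + k3 * P2) by rewrite E; nia.
case: (posnP (k2 * P1 + k3 * P2)) => [w0|w0].
  move: E'; rewrite w0 muln0 addn0 mulnA => /eqP; rewrite eqn_pmul2r; last by lia.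
  move=> /eqP E2.
  have : P2 %| P1 by rewrite E2 dvdn_mull.
  by rewrite dvdn_prime2 // eq_sym (negbTE n12).
have d : P3 %| P4 * (k2 * P1 + k3 * P2).
  rewrite -(dvdn_addr _ (dvdn_mull k1 (dvdn_mull P2 (dvdnn P3)))) -E'.
  exact: dvdn_mull.
have c34 : coprime P3 P4 by rewrite prime_coprime // dvdn_prime2.
rewrite Gauss_dvdr // in d.
have := dvdn_leq w0 d.
nia.
Qed.


Definition mk4 (x0 x1 x2 x3 : nat) : vec 4 :=
  [ffun i : 'I_4 => nth 0 [:: x0; x1; x2; x3] i].

Lemma vadd_mk4 a b c d a' b' c' d' :
  vadd (mk4 a b c d) (mk4 a' b' c' d') = mk4 (a + a') (b + b') (c + c') (d + d').
Proof. by apply/ffunP => i; rewrite !ffunE; case: i => [[|[|[|[|]]]]]. Qed.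

Definition o0 : 'I_4 := @Ordinal 4 0 isT.
Definition o1 : 'I_4 := @Ordinal 4 1 isT.
Definition o2 : 'I_4 := @Ordinal 4 2 isT.
Definition o3 : 'I_4 := @Ordinal 4 3 isT.

Lemma mk4_eta (x : vec 4) : x = mk4 (x o0) (x o1) (x o2) (x o3).
Proof.
apply/ffunP => i; rewrite ffunE.
case: i => [[|[|[|[|//]]]]] H /=; congr (x _); exact: val_inj.
Qed.

Lemma eval_mk4 A B C D x0 x1 x2 x3 :
  @fact_eval [:: A; B; C; D] (mk4 x0 x1 x2 x3) = x0 * A + x1 * B + x2 * C + x3 * D.
Proof. by rewrite /fact_eval !big_ord_recl big_ord0 !ffunE /= addn0 !addnA. Qed.

Lemma Rcast (R : vec 4 -> vec 4 -> Prop) x y x' y' : R x y -> x = x' -> y = y' -> R x' y'.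
Proof. by move=> H <- <-. Qed.

Lemma Rmove (R : vec 4 -> vec 4 -> Prop) : is_congruence R ->
  forall a b c d a' b' c' d' e f g h, R (mk4 a b c d) (mk4 a' b' c' d') ->
  R (mk4 (a + e) (b + f) (c + g) (d + h)) (mk4 (a' + e) (b' + f) (c' + g) (d' + h)).
Proof.
case=> _ _ _ Hadd a b c d a' b' c' d' e f g h H.
by have := Hadd _ _ (mk4 e f g h) H; rewrite !vadd_mk4.
Qed.

Lemma iter_move (R : vec 4 -> vec 4 -> Prop) : is_congruence R ->
  forall A B C D A' B' C' D', R (mk4 A B C D) (mk4 A' B' C' D') ->
  forall k x0 x1 x2 x3,
  R (mk4 (x0 + k * A) (x1 + k * B) (x2 + k * C) (x3 + k * D))
    (mk4 (x0 + k * A') (x1 + k * B') (x2 + k * C') (x3 + k * D')).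
Proof.
move=> HR A B C D A' B' C' D' H k; elim: k => [|k IH] x0 x1 x2 x3.
  by case: HR => Hr _ _ _; rewrite !mul0n !addn0.
have HR' := HR; case: HR' => _ _ Ht _.
apply: (Ht _ (mk4 (x0 + A + k * A') (x1 + B + k * B') (x2 + C + k * C') (x3 + D + k * D'))).
  apply: Rcast (IH (x0 + A) (x1 + B) (x2 + C) (x3 + D)) _ _ => //.
  by congr mk4; rewrite mulSn; lia.
apply: Rcast (Rmove HR (x0 + k * A') (x1 + k * B') (x2 + k * C') (x3 + k * D') H) _ _.
  by congr mk4; lia.
by congr mk4; rewrite mulSn; lia.
Qed.

Lemma Tab (R : vec 4 -> vec 4 -> Prop) P1 P2 : is_congruence R -> coprime P1 P2 -> 0 < P2 ->
  R (mk4 0 P1 0 0) (mk4 P2 0 0 0) ->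
  forall xa xb xa' xb' c d, P1 * xa + P2 * xb = P1 * xa' + P2 * xb' ->
  R (mk4 xa xb c d) (mk4 xa' xb' c d).
Proof.
move=> HR cop p2 H.
suff key : forall xa xb xa' xb' c d, xa <= xa' -> P1 * xa + P2 * xb = P1 * xa' + P2 * xb' ->
  R (mk4 xa xb c d) (mk4 xa' xb' c d).
  move=> xa xb xa' xb' c d E; case: (leqP xa xa') => h; first exact: key.
  case: HR => _ Hs _ _; apply: Hs; apply: key; [exact: ltnW | by []].
move=> xa xb xa' xb' c d le E.
have E2 : P1 * (xa' - xa) + P2 * xb' = P2 * xb by nia.
have d1 : P2 %| P1 * (xa' - xa).
  by rewrite -(dvdn_addl _ (dvdn_mulr xb' (dvdnn P2))) E2 dvdn_mulr.
rewrite Gauss_dvdr in d1; last by rewrite coprime_sym.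
case/dvdnP: d1 => k Ek.
have Eb : xb = xb' + k * P1.
  apply/eqP; rewrite -(eqn_pmul2l p2) -E2 Ek; apply/eqP; nia.
have Ea : xa' = xa + k * P2 by lia.
apply: Rcast (iter_move HR H k xa xb' c d) _ _; congr mk4; lia.
Qed.

Lemma Tcd (R : vec 4 -> vec 4 -> Prop) P1 P2 : is_congruence R -> coprime P1 P2 -> 0 < P2 ->
  R (mk4 0 0 0 P1) (mk4 0 0 P2 0) ->
  forall xc xd xc' xd' a b, P1 * xc + P2 * xd = P1 * xc' + P2 * xd' ->
  R (mk4 a b xc xd) (mk4 a b xc' xd').
Proof.
move=> HR cop p2 H.
suff key : forall xc xd xc' xd' a b, xc <= xc' -> P1 * xc + P2 * xd = P1 * xc' + P2 * xd' ->
  R (mk4 a b xc xd) (mk4 a b xc' xd').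
  move=> xc xd xc' xd' a b E; case: (leqP xc xc') => h; first exact: key.
  case: HR => _ Hs _ _; apply: Hs; apply: key; [exact: ltnW | by []].
move=> xc xd xc' xd' a b le E.
have E2 : P1 * (xc' - xc) + P2 * xd' = P2 * xd by nia.
have d1 : P2 %| P1 * (xc' - xc).
  by rewrite -(dvdn_addl _ (dvdn_mulr xd' (dvdnn P2))) E2 dvdn_mulr.
rewrite Gauss_dvdr in d1; last by rewrite coprime_sym.
case/dvdnP: d1 => k Ek.
have Eb : xd = xd' + k * P1.
  apply/eqP; rewrite -(eqn_pmul2l p2) -E2 Ek; apply/eqP; nia.
have Ea : xc' = xc + k * P2 by lia.
apply: Rcast (iter_move HR H k a b xc xd') _ _; congr mk4; lia.
Qed.


Lemma glue_main (R : vec 4 -> vec 4 -> Prop) p1 p2 p3 p4 u1 u2 v1 v2 :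
  is_congruence R -> coprime p1 p2 -> 0 < p2 ->
  p4 = u1 * p1 + u2 * p2 -> p3 = v1 * p1 + v2 * p2 ->
  R (mk4 0 p1 0 0) (mk4 p2 0 0 0) -> R (mk4 0 0 0 p1) (mk4 0 0 p2 0) ->
  R (mk4 u1 u2 0 0) (mk4 0 0 v1 v2) ->
  forall k ya yb yc yd xa xb xc xd,
  p1 * xa + p2 * xb = p1 * ya + p2 * yb + k * p4 ->
  p1 * yc + p2 * yd = p1 * xc + p2 * xd + k * p3 ->
  R (mk4 xa xb xc xd) (mk4 ya yb yc yd).
Proof.
move=> HR cop p2p E4 E3 H1 H2 H3 k.
have HR' := HR; case: HR' => Hr Hs Ht _.
elim: k => [|k IH] ya yb yc yd xa xb xc xd Ex Ey.
  apply: (Ht _ (mk4 ya yb xc xd)).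
    apply: (Tab HR cop p2p H1); lia.
  apply: (Tcd HR cop p2p H2); lia.
apply: (Ht _ (mk4 (ya + k * u1 + u1) (yb + k * u2 + u2) xc xd)).
  apply: (Tab HR cop p2p H1); rewrite Ex E4; nia.
apply: (Ht _ (mk4 (ya + k * u1) (yb + k * u2) (xc + v1) (xd + v2))).
  apply: Rcast (Rmove HR (ya + k * u1) (yb + k * u2) xc xd H3) _ _; congr mk4; lia.
apply: IH.
  rewrite E4; nia.
rewrite Ey E3; nia.
Qed.

Lemma glue_all (R : vec 4 -> vec 4 -> Prop) p1 p2 p3 p4 u1 u2 v1 v2 :
  is_congruence R -> prime p1 -> prime p2 -> prime p3 -> prime p4 ->
  p1 != p2 -> p3 != p4 ->
  p4 = u1 * p1 + u2 * p2 -> p3 = v1 * p1 + v2 * p2 ->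
  R (mk4 0 p1 0 0) (mk4 p2 0 0 0) -> R (mk4 0 0 0 p1) (mk4 0 0 p2 0) ->
  R (mk4 u1 u2 0 0) (mk4 0 0 v1 v2) ->
  forall x y, @fact_eval [:: p1 * p3; p2 * p3; p1 * p4; p2 * p4] x =
              @fact_eval [:: p1 * p3; p2 * p3; p1 * p4; p2 * p4] y -> R x y.
Proof.
move=> HR pr1 pr2 pr3 pr4 n12 n34 E4 E3 H1 H2 H3 x y.
have cop : coprime p1 p2 by rewrite prime_coprime // dvdn_prime2.
have c43 : coprime p4 p3 by rewrite prime_coprime // dvdn_prime2 // eq_sym.
have p2p := prime_gt0 pr2; have p4p := prime_gt0 pr4.
rewrite (mk4_eta x) (mk4_eta y) !eval_mk4.
move: (x o0) (x o1) (x o2) (x o3) (y o0) (y o1) (y o2) (y o3) => xa xb xc xd ya yb yc yd.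
suff key : forall xa xb xc xd ya yb yc yd,
  p1 * ya + p2 * yb <= p1 * xa + p2 * xb ->
  xa * (p1 * p3) + xb * (p2 * p3) + xc * (p1 * p4) + xd * (p2 * p4) =
  ya * (p1 * p3) + yb * (p2 * p3) + yc * (p1 * p4) + yd * (p2 * p4) ->
  R (mk4 xa xb xc xd) (mk4 ya yb yc yd).
  move=> E; case: (leqP (p1 * ya + p2 * yb) (p1 * xa + p2 * xb)) => h.
    exact: key.
  case: HR => _ Hs _ _; apply: Hs; apply: key; [exact: ltnW | by []].
move=> {}xa {}xb {}xc {}xd {}ya {}yb {}yc {}yd le E.
set tx := p1 * xa + p2 * xb in le *; set ty := p1 * ya + p2 * yb in le *.
have E' : p3 * (tx - ty) + p4 * (p1 * xc + p2 * xd) = p4 * (p1 * yc + p2 * yd).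
  rewrite /tx /ty in le *; nia.
have d : p4 %| p3 * (tx - ty).
  have : p4 %| p3 * (tx - ty) + p4 * (p1 * xc + p2 * xd) by rewrite E' dvdn_mulr.
  by rewrite dvdn_addl // dvdn_mulr.
rewrite Gauss_dvdr // in d.
case/dvdnP: d => k Ek.
apply: (glue_main HR cop p2p E4 E3 H1 H2 H3 (k := k)).
  rewrite /tx /ty in le Ek; lia.
apply/eqP; rewrite -(eqn_pmul2l p4p) -E' Ek; apply/eqP; nia.
Qed.


Lemma mk4_inj a b c d a' b' c' d' : mk4 a b c d = mk4 a' b' c' d' ->
  [/\ a = a', b = b', c = c' & d = d'].
Proof.
move=> E.
have := congr1 (fun f : vec 4 => f o0) E; have := congr1 (fun f : vec 4 => f o1) E.
have := congr1 (fun f : vec 4 => f o2) E; have := congr1 (fun f : vec 4 => f o3) E.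
by rewrite !ffunE /=.
Qed.

Lemma lin_cong w0 w1 w2 w3 :
  is_congruence (fun a b : vec 4 => @fact_eval [:: w0; w1; w2; w3] a = @fact_eval [:: w0; w1; w2; w3] b).
Proof.
split => //.
- by move=> a b c -> ->.
- move=> a b c E; rewrite (mk4_eta a) (mk4_eta b) (mk4_eta c) !vadd_mk4 !eval_mk4.
  move: E; rewrite (mk4_eta a) (mk4_eta b) !eval_mk4 => E'; rewrite !ffunE /=; nia.
Qed.


Lemma cop_primes p q : prime p -> prime q -> p != q -> coprime p q.
Proof. by move=> pp pq ne; rewrite prime_coprime // dvdn_prime2. Qed.

Lemma imp_false (P Q : Prop) : (P -> Q) -> P -> ~ Q -> False.
Proof. by move=> f /f. Qed.

Lemma gens_mg p1 p2 p3 p4 :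
  prime p1 -> prime p2 -> prime p3 -> prime p4 ->
  uniq [:: p1; p2; p3; p4] ->
  p1 * p2 < p3 -> p1 * p2 < p4 ->
  minimal_gens (sg_of [:: p1 * p3; p2 * p3; p1 * p4; p2 * p4]) [:: p1 * p3; p2 * p3; p1 * p4; p2 * p4].
Proof.
move=> pr1 pr2 pr3 pr4 U lt3 lt4.
move: U; rewrite /= !inE !negb_or => /andP [/and3P[n12 n13 n14] /andP [/andP[n23 n24] /andP [n34 _]]].
have q1 := prime_gt1 pr1; have q2 := prime_gt1 pr2; have q3 := prime_gt1 pr3; have q4 := prime_gt1 pr4.
have nab : p1 * p3 != p2 * p3 by rewrite eqn_pmul2r // ltnW.
have nac : p1 * p3 != p1 * p4 by rewrite eqn_pmul2l // ltnW.
have nbd : p2 * p3 != p2 * p4 by rewrite eqn_pmul2l // ltnW.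
have ncd : p1 * p4 != p2 * p4 by rewrite eqn_pmul2r // ltnW.
have cad : coprime (p1 * p3) (p2 * p4).
  by rewrite coprimeMl !coprimeMr !cop_primes // eq_sym.
have cbc : coprime (p2 * p3) (p1 * p4).
  by rewrite coprimeMl !coprimeMr !cop_primes // eq_sym.
have nad : p1 * p3 != p2 * p4.
  apply/eqP => E; move: cad; rewrite /coprime E gcdnn; nia.
have nbc : p2 * p3 != p1 * p4.
  apply/eqP => E; move: cbc; rewrite /coprime E gcdnn; nia.
split => //.
  by rewrite /= !inE !negb_or nab nac nad nbc nbd ncd.
move=> [|[|[|[|i]]]] // _ /=.
- rewrite eqxx => /in_sg3 [k1 [k2 [k3 E]]].
  exact: (@NM p1 p2 p3 p4 k1 k2 k3).
- rewrite (negbTE nab) eqxx => /in_sg3 [k1 [k2 [k3 E]]].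
  apply: (@NM p2 p1 p3 p4 k1 k3 k2) => //; first by rewrite eq_sym.
    by rewrite mulnC.
  rewrite E; nia.
- rewrite (negbTE nac) (negbTE nbc) eqxx => /in_sg3 [k1 [k2 [k3 E]]].
  apply: (@NM p1 p2 p4 p3 k3 k1 k2) => //; first by rewrite eq_sym.
  rewrite E; nia.
- rewrite (negbTE nad) (negbTE nbd) (negbTE ncd) eqxx => /in_sg3 [k1 [k2 [k3 E]]].
  apply: (@NM p2 p1 p4 p3 k3 k2 k1) => //; try by rewrite eq_sym.
    by rewrite mulnC.
  rewrite E; nia.
Qed.

Lemma CI_part p1 p2 p3 p4 :
  prime p1 -> prime p2 -> prime p3 -> prime p4 ->
  uniq [:: p1; p2; p3; p4] ->
  p1 * p2 < p3 -> p1 * p2 < p4 ->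
  complete_intersection (sg_of [:: p1 * p3; p2 * p3; p1 * p4; p2 * p4]).
Proof.
move=> pr1 pr2 pr3 pr4 U lt3 lt4.
have MG := gens_mg pr1 pr2 pr3 pr4 U lt3 lt4.
move: U; rewrite /= !inE !negb_or => /andP [/and3P[n12 n13 n14] /andP [/andP[n23 n24] /andP [n34 _]]].
have q1 := prime_gt1 pr1; have q2 := prime_gt1 pr2; have q3 := prime_gt1 pr3; have q4 := prime_gt1 pr4.
have nab : p1 * p3 != p2 * p3 by rewrite eqn_pmul2r // ltnW.
have nac : p1 * p3 != p1 * p4 by rewrite eqn_pmul2l // ltnW.
have nbd : p2 * p3 != p2 * p4 by rewrite eqn_pmul2l // ltnW.
have ncd : p1 * p4 != p2 * p4 by rewrite eqn_pmul2r // ltnW.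
have cad : coprime (p1 * p3) (p2 * p4).
  by rewrite coprimeMl !coprimeMr !cop_primes // eq_sym.
have cbc : coprime (p2 * p3) (p1 * p4).
  by rewrite coprimeMl !coprimeMr !cop_primes // eq_sym.
have nad : p1 * p3 != p2 * p4.
  apply/eqP => E; move: cad; rewrite /coprime E gcdnn; nia.
have nbc : p2 * p3 != p1 * p4.
  apply/eqP => E; move: cbc; rewrite /coprime E gcdnn; nia.
have [u1 [u2 E4]] := sylv pr1 pr2 n12 lt4.
have [v1 [v2 E3]] := sylv pr1 pr2 n12 lt3.
exists [:: p1 * p3; p2 * p3; p1 * p4; p2 * p4]; split; first exact: MG.
set r1 := (mk4 p2 0 0 0, mk4 0 p1 0 0).
set r2 := (mk4 0 0 p2 0, mk4 0 0 0 p1).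
set r3 := (mk4 u1 u2 0 0, mk4 0 0 v1 v2).
have ev1 : @fact_eval [:: p1 * p3; p2 * p3; p1 * p4; p2 * p4] r1.1 =
           @fact_eval [:: p1 * p3; p2 * p3; p1 * p4; p2 * p4] r1.2.
  by rewrite !eval_mk4; nia.
have ev2 : @fact_eval [:: p1 * p3; p2 * p3; p1 * p4; p2 * p4] r2.1 =
           @fact_eval [:: p1 * p3; p2 * p3; p1 * p4; p2 * p4] r2.2.
  by rewrite !eval_mk4; nia.
have ev3 : @fact_eval [:: p1 * p3; p2 * p3; p1 * p4; p2 * p4] r3.1 =
           @fact_eval [:: p1 * p3; p2 * p3; p1 * p4; p2 * p4] r3.2.
  by rewrite !eval_mk4 E4 E3; nia.
exists [:: r1; r2; r3]; split => //.
  rewrite /= !inE !negb_or andbT -andbA; apply/and3P; split.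
  - by apply/eqP => -[/mk4_inj [E _ _ _] _]; lia.
  - by apply/eqP => -[_ /mk4_inj [_ E _ _]]; lia.
  - by apply/eqP => -[/mk4_inj [_ _ E _] _]; lia.
have pres : is_presentation [:: p1 * p3; p2 * p3; p1 * p4; p2 * p4] [:: r1; r2; r3].
  move=> x y; split.
    move=> H; apply: (H (fun a b => @fact_eval [:: p1 * p3; p2 * p3; p1 * p4; p2 * p4] a =
                                    @fact_eval [:: p1 * p3; p2 * p3; p1 * p4; p2 * p4] b)).
      exact: lin_cong.
    by move=> p; rewrite !inE => /or3P [] /eqP ->.
  move=> Exy R HR Hrho.
  have HR' := HR; case: HR' => _ Hs _ _.
  apply: (glue_all HR pr1 pr2 pr3 pr4 n12 n34 E4 E3) => //.
  - by apply: Hs; apply: (Hrho r1); rewrite inE eqxx.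
  - by apply: Hs; apply: (Hrho r2); rewrite !inE eqxx orbT.
  - by apply: (Hrho r3); rewrite !inE eqxx !orbT.
split => // rho' Hsub [p Hp Hnp] Hpres.
have Hg := (Hpres p.1 p.2).2.
have others : forall q, q \in rho' -> q != p.
  by move=> q Hq; apply: contraNneq Hnp => <-.
move: Hp; rewrite !inE => /or3P [] /eqP Ep; rewrite Ep in Hg others.
- have := Hg ev1 (fun a b => @fact_eval [:: p3; 0; u1 * p1; u1 * p2] a =
                             @fact_eval [:: p3; 0; u1 * p1; u1 * p2] b) (lin_cong _ _ _ _).
  move=> H; apply: (imp_false H); last by rewrite /r1 /= !eval_mk4; nia.
  move=> q Hq; have := others q Hq; have := Hsub q Hq; rewrite !inE.
  by case/or3P => /eqP ->; rewrite ?eqxx // => _; rewrite /r1 /r2 /r3 /= !eval_mk4 ?E3; nia.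
- have := Hg ev2 (fun a b => @fact_eval [:: v1 * p1; v1 * p2; p4; 0] a =
                             @fact_eval [:: v1 * p1; v1 * p2; p4; 0] b) (lin_cong _ _ _ _).
  move=> H; apply: (imp_false H); last by rewrite /r2 /= !eval_mk4; nia.
  move=> q Hq; have := others q Hq; have := Hsub q Hq; rewrite !inE.
  by case/or3P => /eqP ->; rewrite ?eqxx // => _; rewrite /r1 /r2 /r3 /= !eval_mk4 ?E4; nia.
- have := Hg ev3 (fun a b => @fact_eval [:: p1; p2; 0; 0] a =
                             @fact_eval [:: p1; p2; 0; 0] b) (lin_cong _ _ _ _).
  move=> H; apply: (imp_false H); last by rewrite /r3 /= !eval_mk4; nia.
  move=> q Hq; have := others q Hq; have := Hsub q Hq; rewrite !inE.
  by case/or3P => /eqP ->; rewrite ?eqxx // => _; rewrite /r1 /r2 /r3 /= !eval_mk4 ?E4; nia.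
Qed.


Lemma sum4 (l : nat -> nat) n1 n2 n3 n4 :
  \sum_(1 <= i < size [:: n1; n2; n3; n4]) l i * nth 0 [:: n1; n2; n3; n4] i =
  l 1 * n2 + l 2 * n3 + l 3 * n4.
Proof. by rewrite /= big_nat_recl // big_nat_recl // big_nat_recl // big_geq // addn0 !addnA. Qed.

Lemma apery_eq (S : nat -> Prop) m s s' :
  (forall k x, S x -> S (x + k * m)) ->
  Apery S m s -> Apery S m s' -> s = s' %[mod m] -> s = s'.
Proof.
move=> Hcl.
wlog le : s s' / s <= s'.
  move=> W A1 A2 E; case: (leqP s s') => h; first exact: W.
  by apply/esym; apply: (W s' s (ltnW h) A2 A1); apply/esym.
move=> [S1 _] [_ N2] E.
case: (ltnP s s') => [lt|ge]; last by apply/eqP; rewrite eqn_leq le ge.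
move/eqP: E; rewrite eq_sym (eqn_mod_dvd _ (ltnW lt)) => /dvdnP [q Eq].
case: q Eq => [|q] Eq; first by move: lt; rewrite -subn_gt0 Eq.
rewrite mulSn in Eq.
exfalso; apply: N2; split; first by lia.
have -> : s' - m = s + q * m by lia.
exact: Hcl.
Qed.

Lemma gcd3_12 x y z : coprime x y -> gcdn (gcdn x y) z = 1.
Proof. by move/eqP->; rewrite gcd1n. Qed.
Lemma gcd3_13 x y z : coprime x z -> gcdn (gcdn x y) z = 1.
Proof. by move/eqP=> H; rewrite gcdnAC H gcd1n. Qed.
Lemma gcd3_23 x y z : coprime y z -> gcdn (gcdn x y) z = 1.
Proof. by move/eqP=> H; rewrite -gcdnA H gcdn1. Qed.

Lemma notfree p1 p2 p3 p4 :
  prime p1 -> prime p2 -> prime p3 -> prime p4 ->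
  uniq [:: p1; p2; p3; p4] ->
  p1 * p2 < p3 -> p1 * p2 < p4 ->
  ~ free (sg_of [:: p1 * p3; p2 * p3; p1 * p4; p2 * p4]).
Proof.
move=> pr1 pr2 pr3 pr4 U lt3 lt4.
have MG := gens_mg pr1 pr2 pr3 pr4 U lt3 lt4.
move: U; rewrite /= !inE !negb_or => /andP [/and3P[n12 n13 n14] /andP [/andP[n23 n24] /andP [n34 _]]].
have q1 := prime_gt1 pr1; have q2 := prime_gt1 pr2; have q3 := prime_gt1 pr3; have q4 := prime_gt1 pr4.
have cad : coprime (p1 * p3) (p2 * p4).
  by rewrite coprimeMl !coprimeMr !cop_primes // eq_sym.
have cbc : coprime (p2 * p3) (p1 * p4).
  by rewrite coprimeMl !coprimeMr !cop_primes // eq_sym.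
have cda : coprime (p2 * p4) (p1 * p3) by rewrite coprime_sym.
have ccb : coprime (p1 * p4) (p2 * p3) by rewrite coprime_sym.
set G := [:: p1 * p3; p2 * p3; p1 * p4; p2 * p4] in MG *.
case: MG => UG _ HminG.
have G0 : 0 \notin G.
  by apply/negP; rewrite !inE => /or4P [] /eqP E; nia.
case=> g [[Ug HS Hmin] [g0 [phi [Hphi Hap]]]].
have gpos : 0 \notin g.
  apply/negP => H0; apply: (Hmin (index 0 g)); first by rewrite index_mem.
  rewrite nth_index //; exact: in_sg0.
have Hming : forall x, x \in g -> ~ in_sg (rem x g) x.
  by move=> x xg; have := Hmin (index x g); rewrite index_mem nth_index //; apply.
have HminG' : forall x, x \in G -> ~ in_sg (rem x G) x.
  by move=> x xg; have := HminG (index x G); rewrite index_mem nth_index //; apply.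
have sub1 : forall x, x \in g -> x \in G.
  move=> x xg; apply: (@atom_in (in_sg G)) => //.
  - move=> y z Py Pz E; apply: (irred_of_min xg (Hming x xg)) => //.
    + exact: (HS y).1.
    + exact: (HS z).1.
  - exact: (HS x).2 (in_sg_mem xg).
  - by rewrite lt0n; apply: contraNneq gpos => <-.
have sub2 : forall x, x \in G -> x \in g.
  move=> x xG; apply: (@atom_in (in_sg G)) => //.
  - by move=> w Hw; apply: (HS w).2.
  - move=> y z Py Pz E; exact: (irred_of_min xG (HminG' x xG)).
  - exact: (HS x).1 (in_sg_mem xG).
  - by rewrite lt0n; apply: contraNneq G0 => <-.
have P : perm_eq g G by apply: uniq_perm => // x; apply/idP/idP; [apply: sub1 | apply: sub2].
have sz := perm_size P.
have [n1 [n2 [n3 [n4 Eg]]]] : exists n1 n2 n3 n4, g = [:: n1; n2; n3; n4].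
  by case: (g) sz => [|x1 [|x2 [|x3 [|x4 [|? ?]]]]] // _; exists x1, x2, x3, x4.
subst g.
have Ug' := Ug.
move: Ug'; rewrite /= !inE !negb_or => /andP [/and3P[m12 m13 m14] /andP [/andP[m23 m24] /andP [m34 _]]].
have Hn4 : ~ in_sg [:: n1; n2; n3] n4.
  move=> H; apply: (Hming n4); first by rewrite !inE eqxx !orbT.
  apply: in_sg_sub H => v Hv; apply: in_sg_mem; rewrite mem_rem_uniq // inE.
  move: Hv; rewrite !inE => /or3P [] /eqP ->; rewrite ?eqxx ?orbT ?m14 ?m24 ?m34 //.
have gcd3 : gcdn (gcdn n1 n2) n3 = 1.
  have := sub1 n1; have := sub1 n2; have := sub1 n3.
  rewrite !inE !eqxx !orbT /=.
  move=> /(_ isT) H3 /(_ isT) H2 /(_ isT) H1.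
  move: m12 m13 m23; move: H1 H2 H3.
  by move=> /or4P [] /eqP -> /or4P [] /eqP -> /or4P [] /eqP ->; rewrite ?eqxx // => *;
    solve [apply: gcd3_12; done | apply: gcd3_13; done | apply: gcd3_23; done].
have m0 : 0 < n1.
  by rewrite lt0n; apply: contraNneq gpos => <-; rewrite inE eqxx.
set d2 := gcdn n1 n2.
have d20 : 0 < d2 by rewrite gcdn_gt0 m0.
have c23 : coprime d2 n3 by apply/eqP.
have b1 : n1 %/ d2 <= (phi 1).+1.
  case: (Hphi 1 isT) => _ /= /in_sg1 [k Ek] _.
  apply: dvdn_leq => //; apply: div_gcd_dvd => //.
  by rewrite Ek dvdn_mull.
have b2 : d2 <= (phi 2).+1.
  case: (Hphi 2 isT) => _ /= /in_sg2 [k1 [k2 Ek]] _.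
  apply: dvdn_leq => //; rewrite -(Gauss_dvdl _ c23) Ek.
  by rewrite dvdn_add // dvdn_mull // ?dvdn_gcdl ?dvdn_gcdr.
have b3 : 0 < phi 3.
  case: (Hphi 3 isT) => _ /= H3 _; rewrite lt0n; apply/eqP => E3.
  by apply: Hn4; rewrite E3 mul1n in H3.
have dd : gcdn d2 n3 %| n4 by rewrite (eqP c23) dvd1n.
have [l3 [Hl3 E3]] := modsolve d20 dd.
rewrite (eqP c23) divn1 in Hl3.
set y := n4 + (n1 - 1) * (l3 * n3).
have Hy : y + l3 * n3 = n4 + n1 %/ d2 * (l3 * n3) * d2.
  by rewrite mulnAC divnK ?dvdn_gcdl // /y -addnA -mulSnr subn1 prednK.
have dy : d2 %| y.
  have : (y + l3 * n3) %% d2 = (0 + l3 * n3) %% d2.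
    by rewrite add0n E3 Hy addnC modnMDl.
  by move/eqP; rewrite eqn_modDr mod0n.
have [l2 [Hl2 E2]] := modsolve m0 dy.
have cong : l2 * n2 + l3 * n3 = n4 %[mod n1].
  rewrite -modnDml E2 modnDml.
  have -> : y + l3 * n3 = n4 + l3 * n3 * n1.
    by rewrite /y -addnA -mulSnr subn1 prednK // mulnC.
  by rewrite addnC modnMDl.
have Hcl : forall k x, sg_of G x -> sg_of G (x + k * n1).
  move=> k x /(HS x) Hx; apply/(HS _); apply: in_sgD => //; apply: in_sgM.
  by apply: in_sg_mem; rewrite inE eqxx.
have A1 : Apery (sg_of G) n1 n4.
  apply/(Hap n4); exists (fun i => if i == 3 then 1 else 0); split.
    by move=> i /andP [i0 i4]; case: i i0 i4 => [|[|[|[|i]]]].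
  by rewrite sum4 /= !mul0n mul1n.
have A2 : Apery (sg_of G) n1 (l2 * n2 + l3 * n3).
  apply/(Hap _); exists (fun i => if i == 1 then l2 else if i == 2 then l3 else 0); split.
    move=> i /andP [i0 i4]; case: i i0 i4 => [|[|[|[|i]]]] //= _ _.
      by rewrite -ltnS (leq_trans Hl2 b1).
    by rewrite -ltnS (leq_trans Hl3 b2).
  by rewrite sum4 /= mul0n addn0.
have := apery_eq Hcl A2 A1 cong => E.
by apply: Hn4; apply/in_sg3; exists 0, l2, l3; rewrite E.
Qed.


Theorem mainTheorem9 (p1 p2 p3 p4 : nat) :
  prime p1 -> prime p2 -> prime p3 -> prime p4 ->
  uniq [:: p1; p2; p3; p4] ->
  p1 * p2 < p3 -> p1 * p2 < p4 ->
  let S := sg_of [:: p1 * p3; p2 * p3; p1 * p4; p2 * p4] in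
  complete_intersection S /\ ~ free S.
Proof.
move=> pr1 pr2 pr3 pr4 U lt3 lt4 S; split.
  exact: CI_part.
exact: notfree.
Qed.
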